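(* Let $m,k\in\mathbb{N}$ and let $\beta\in\mathbb{C}$ with $\beta,\ 2\beta+2m+2k+2\notin\mathbb{Z}_0^-$. Then \[ {}_3F_2\left[\begin{array}{r} -2m-1,\ 2+2m,\ \beta;\\ -2m-2k-1,\ 2\beta+2m+2k+2;\end{array}1\right]_{2m+1}=\frac{(k+1)(2\beta+2m+2k+1)(2\beta+2k+1)_{2m}\left(2+k\right)_{2m}}{(2m+2k+1)(\beta+k+1)(2k+1)_{2m}\left(2+\beta+k\right)_{2m}}. \]
   Context: $\mathbb{N}=\{1,2,3,\dots\}$, $\mathbb{Z}_0^-=\{0,-1,-2,\dots\}$. For $a\in\mathbb{C}$ and $n\in\mathbb{N}_0$, $(a)_0=1$ and $(a)_n=a(a+1)\cdots(a+n-1)$. For $N\in\mathbb{N}_0$, ${}_3F_2\left[\begin{array}{r} a_1,a_2,a_3;\\ b_1,b_2;\end{array}z\right]_N=\sum_{n=0}^{N}\frac{(a_1)_n(a_2)_n(a_3)_n}{(b_1)_n(b_2)_n}\frac{z^n}{n!}$ (the sum of the first $N+1$ terms), defined whenever $(b_1)_n(b_2)_n\neq0$ for $0\le n\le N$. *)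

(* Defs.v *)
From HB Require Import structures.
From mathcomp Require Import all_boot all_order all_algebra.
From mathcomp Require Import complex.
From mathcomp Require Import reals.
Set Implicit Arguments. Unset Strict Implicit. Unset Printing Implicit Defensive.
Import Order.TTheory GRing.Theory Num.Theory.
Local Open Scope ring_scope.

Definition poch {R : ringType} (a : R) (n : nat) : R :=
  \prod_(i < n) (a + i%:R).

Definition notNonPosInt {R : ringType} (a : R) : Prop :=
  forall n : nat, a <> - n%:R.

(* truncated 3F2: sum of the first N+1 terms *)
Definition F32trunc {R : fieldType} (a1 a2 a3 b1 b2 z : R) (N : nat) : R :=
  \sum_(n < N.+1)
    (poch a1 n * poch a2 n * poch a3 n) / (poch b1 n * poch b2 n)
      * z ^+ n / (n`!)%:R.

(* Main.v *)
Require Import Defs.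
From HB Require Import structures.
From mathcomp Require Import all_boot all_order all_algebra.
From mathcomp Require Import complex.
From mathcomp Require Import reals.
From mathcomp Require Import ring lra zify.
Set Implicit Arguments. Unset Strict Implicit. Unset Printing Implicit Defensive.
Import Order.TTheory GRing.Theory Num.Theory.
Local Open Scope ring_scope.

Definition cP1 (F : numFieldType) (a k b : F) : F := 12%:R + 32%:R*b + 20%:R*b^+2 + 40%:R*k + 60%:R*k*b + 12%:R*k*b^+2 + 40%:R*k^+2 + 24%:R*k^+2*b + 12%:R*k^+3 + 32%:R*a + 58%:R*a*b + 22%:R*a*b^+2 + 76%:R*a*k + 72%:R*a*k*b + 8%:R*a*k*b^+2 + 50%:R*a*k^+2 + 16%:R*a*k^+2*b + 8%:R*a*k^+3 + 31%:R*a^+2 + 35%:R*a^+2*b + 6%:R*a^+2*b^+2 + 48%:R*a^+2*k + 22%:R*a^+2*k*b + 16%:R*a^+2*k^+2 + 13%:R*a^+3 + 7%:R*a^+3*b + 10%:R*a^+3*k + 2%:R*a^+4.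
Definition cP2 (F : numFieldType) (a k b : F) : F := 12%:R + 10%:R*b - 6%:R*b^+2 + 20%:R*k + 6%:R*k^+2 + 20%:R*a + 8%:R*a*b - 4%:R*a*b^+2 + 22%:R*a*k + 4%:R*a*k^+2 + 11%:R*a^+2 + a^+2*b + 6%:R*a^+2*k + 2%:R*a^+3.
Definition cP3 (F : numFieldType) (a k b : F) : F := - 3%:R - 11%:R*b - 2%:R*b^+2 - 10%:R*k - 6%:R*k*b - 4%:R*k^+2 - 5%:R*a - 7%:R*a*b - 6%:R*a*k - 2%:R*a^+2.
Definition cP4 (F : numFieldType) (a k b : F) : F := - 3%:R - b - 2%:R*k - 2%:R*a.
Definition Pc (F : numFieldType) (a k b x : F) : F :=
  (cP1 a k b * x + cP2 a k b * x^+2 + cP3 a k b * x^+3 + cP4 a k b * x^+4)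
  / ((a+1)*(a+2)*(b+k+a+1)*(b+k+a+2)).

Definition ee (F : numFieldType) (a k : F) := - a - 2%:R * k.
Definition ff (F : numFieldType) (a k b : F) := 2%:R * b + a + 2%:R * k + 1.
Definition rho1 (F : numFieldType) (a k b n : F) :=
  let e := ee a k in let f := ff a k b in
  (a+1+n)*(a+2%:R+n)/((a+1)*(a+2%:R))*(e-2%:R+n).
Definition rr (F : numFieldType) (a k b : F) :=
  let e := ee a k in let f := ff a k b in
  (f+1)*f*(k+a+1)*(k+a+2%:R)/((a+2%:R*k+2%:R)*(a+2%:R*k+1)*(b+k+a+1)*(b+k+a+2%:R)).
Definition rho0 (F : numFieldType) (a k b n : F) :=
  let e := ee a k in let f := ff a k b in
  (n-a-2%:R)*(n-a-1)/((a+2%:R)*(a+1))*(e-2%:R)*(e-1)/(e-1+n)*(f+n)*(f+n+1)/(f*(f+1)).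
Definition rhoT (F : numFieldType) (a k b n : F) :=
  let e := ee a k in let f := ff a k b in
  (n-a-2%:R)*(n+a+1)*(n+b)/((n+e-1)*(n+f+2%:R)*(n+1)).

Lemma key (F : numFieldType) (a k b n : F) :
  let e := ee a k in let f := ff a k b in
  a + 1 != 0 -> a + 2%:R != 0 -> e - 2%:R != 0 -> e - 1 != 0 -> e - 1 + n != 0 ->
  f != 0 -> f + 1 != 0 -> n + f + 2%:R != 0 -> n + 1 != 0 ->
  a + 2%:R * k + 1 != 0 -> a + 2%:R * k + 2%:R != 0 ->
  b + k + a + 1 != 0 -> b + k + a + 2%:R != 0 ->
  rho1 a k b n - rr a k b * rho0 a k b n
  = Pc a k b (n+1) * rhoT a k b n - Pc a k b n.
Proof.
move=> e f h1 h2 h3 h4 h5 h6 h7 h8 h9 h10 h11 h12 h13.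
have h5' : n + e - 1 != 0 by rewrite -addrA addrC.
rewrite /rho1 /rho0 /rr /rhoT -/e -/f.
rewrite /Pc /cP1 /cP2 /cP3 /cP4 /e /f /ee /ff in h3 h4 h5 h5' h6 h7 h8 |- *.
field.
by rewrite h13 h12 h2 h1 h9 h8 h5' h7 h6 h10 h11.
Qed.



Lemma pochS (F : nzRingType) (x : F) n : poch x n.+1 = poch x n * (x + n%:R).
Proof. by rewrite /poch big_ord_recr. Qed.

Lemma poch0 (F : nzRingType) (x : F) : poch x 0 = 1.
Proof. by rewrite /poch big_ord0. Qed.

Lemma pochSl (F : nzRingType) (x : F) n : poch x n.+1 = x * poch (x + 1) n.
Proof.
rewrite /poch big_ord_recl addr0; congr (_ * _); apply: eq_bigr => i _.
by rewrite /bump /= -nat1r addrA.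
Qed.

Lemma poch_neq0 (F : numFieldType) (x : F) n :
  (forall i, (i < n)%N -> x + i%:R != 0) -> poch x n != 0.
Proof. move=> H; rewrite /poch; apply/prodf_neq0 => i _; exact: H. Qed.

Lemma poch_eq0 (F : comNzRingType) (x : F) n j : (j < n)%N -> x = - j%:R -> poch x n = 0.
Proof.
move=> jn ->; rewrite /poch (bigD1 (Ordinal jn) isT) /= addNr mul0r //.
Qed.

Lemma poch_shift2 (F : comNzRingType) (x : F) n :
  x * (x + 1) * poch (x + 2%:R) n = poch x n * (x + n%:R) * (x + n%:R + 1).
Proof.
have h1 : poch x n.+2 = x * ((x+1) * poch (x+1+1) n) by rewrite pochSl pochSl.
have h2 : poch x n.+2 = poch x n * (x + n%:R) * (x + n.+1%:R) by rewrite pochS pochS.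
have e1 : x + 1 + 1 = x + 2%:R by rewrite -addrA.
by rewrite -e1 -mulrA -h1 h2 -natr1 addrA.
Qed.

Lemma poch_up (F : numFieldType) (x : F) n : x * (x + 1) != 0 ->
  poch (x + 2%:R) n = poch x n * (x + n%:R) * (x + n%:R + 1) / (x * (x + 1)).
Proof. rewrite mulf_eq0 negb_or => /andP [h1 h2]; rewrite -poch_shift2; field; by rewrite h1 h2. Qed.

Lemma poch_down (F : numFieldType) (x : F) n : (x + n%:R) * (x + n%:R + 1) != 0 ->
  poch x n = x * (x + 1) * poch (x + 2%:R) n / ((x + n%:R) * (x + n%:R + 1)).
Proof. rewrite mulf_eq0 negb_or => /andP [h1 h2]; rewrite poch_shift2; field; by rewrite ?h1 ?h2. Qed.

Lemma natr_eqE (F : nzRingType) (p q : nat) : p = q -> (p%:R : F) = q%:R.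
Proof. by move->. Qed.

Lemma natr_neq0 (F : numFieldType) p : (0 < p)%N -> (p%:R : F) != 0.
Proof. by rewrite pnatr_eq0 -lt0n. Qed.

Lemma sub_natr_neq0 (F : numFieldType) p q : p != q -> (p%:R - q%:R : F) != 0.
Proof. by rewrite subr_eq0 eqr_nat. Qed.

Definition tt (F : numFieldType) (k : nat) (b : F) (m n : nat) : F :=
  (poch (- (2 * m + 1)%:R) n * poch (2 + 2 * m)%:R n * poch b n) /
  (poch (- (2 * m + 2 * k + 1)%:R) n * poch (2 * b + (2 * m + 2 * k + 2)%:R) n)
  * 1 ^+ n / (n`!)%:R.

Definition SS (F : numFieldType) (k : nat) (b : F) (m : nat) : F :=
  F32trunc (- (2 * m + 1)%:R) (2 + 2 * m)%:R b
           (- (2 * m + 2 * k + 1)%:R) (2 * b + (2 * m + 2 * k + 2)%:R)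
           1 (2 * m + 1).

Definition aa (F : numFieldType) (m : nat) : F := (2 * m + 1)%:R.

Definition TT (F : numFieldType) (k : nat) (b : F) (m n : nat) : F :=
  let a := aa F m in let K := k%:R in let e := ee a K in let f := ff a K b in
  poch (- a - 2%:R) n * poch (a + 1) n * poch b n /
   (poch (e - 2%:R) n.+1 * poch (f + 2%:R) n * (n`!)%:R).

Definition GG (F : numFieldType) (k : nat) (b : F) (m n : nat) : F :=
  Pc (aa F m) k%:R b n%:R * TT k b m n.

Lemma neq0_pos (F : numFieldType) (x : F) p : x = p%:R -> (0 < p)%N -> x != 0.
Proof. by move=> -> hp; rewrite pnatr_eq0 -lt0n. Qed.

Lemma neq0_neg (F : numFieldType) (x : F) p : x = - p%:R -> (0 < p)%N -> x != 0.
Proof. by move=> -> hp; rewrite oppr_eq0 pnatr_eq0 -lt0n. Qed.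

Lemma neq0_sub (F : numFieldType) (x : F) p q : x = p%:R - q%:R -> p != q -> x != 0.
Proof. by move=> -> hp; rewrite subr_eq0 eqr_nat. Qed.

Lemma neq0_lin (F : numFieldType) (x c : F) p : x = c + p%:R -> (forall j : nat, c + j%:R != 0) -> x != 0.
Proof. by move=> -> h. Qed.

Ltac nateq := rewrite ?natrD; ring.

Lemma nz_ak1 (F : numFieldType) m k : aa F m + 2%:R * k%:R + 1 != 0.
Proof. by apply: (neq0_pos (p := 2 * m + 2 * k + 2)); [rewrite /aa; nateq | lia]. Qed.
Lemma nz_ak2 (F : numFieldType) m k : aa F m + 2%:R * k%:R + 2%:R != 0.
Proof. by apply: (neq0_pos (p := 2 * m + 2 * k + 3)); [rewrite /aa; nateq | lia]. Qed.
Lemma nz_bk1 (F : numFieldType) (b : F) m k (hB : forall j : nat, b + j%:R != 0) :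
  b + k%:R + aa F m + 1 != 0.
Proof. by apply: (neq0_lin (p := 2 * m + k + 2) _ hB); rewrite /aa; nateq. Qed.
Lemma nz_bk2 (F : numFieldType) (b : F) m k (hB : forall j : nat, b + j%:R != 0) :
  b + k%:R + aa F m + 2%:R != 0.
Proof. by apply: (neq0_lin (p := 2 * m + k + 3) _ hB); rewrite /aa; nateq. Qed.

Lemma nz_pe (F : numFieldType) m k n (hn : (n < 2 * m + 4)%N) :
  poch (ee (aa F m) k%:R - 2%:R) n != 0.
Proof.
apply: poch_neq0 => i hi.
by apply: (neq0_sub (p := i) (q := 2 * m + 2 * k + 3)); [rewrite /ee /aa; nateq | lia].
Qed.
Lemma nz_pf (F : numFieldType) (b : F) m k n (h2B : forall j : nat, 2 * b + j%:R != 0) :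
  poch (ff (aa F m) k%:R b + 2%:R) n != 0.
Proof.
apply: poch_neq0 => i hi.
by apply: (neq0_lin (p := 2 * m + 2 * k + 4 + i) _ h2B); rewrite /ff /aa; nateq.
Qed.

Lemma pointwise (F : numFieldType) (k : nat) (b : F) (m n : nat)
  (hk : (1 <= k)%N) (hn : (n < 2 * m + 4)%N)
  (hB : forall j : nat, b + j%:R != 0) (h2B : forall j : nat, 2 * b + j%:R != 0) :
  tt k b m.+1 n - rr (aa F m) k%:R b * tt k b m n = GG k b m n.+1 - GG k b m n.
Proof.
rewrite /GG /TT /tt.
set a := aa F m; set K := (k%:R : F); set N := (n%:R : F).
have A1 : (- (2 * m.+1 + 1)%:R : F) = - a - 2%:R.
  rewrite /a /aa (natr_eqE F (_ : 2 * m.+1 + 1 = 2 * m + 1 + 2)%N); last lia.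
  by rewrite natrD opprD.
have A2 : ((2 + 2 * m.+1)%:R : F) = (a + 1) + 2%:R.
  rewrite /a /aa (natr_eqE F (_ : 2 + 2 * m.+1 = 2 * m + 1 + 1 + 2)%N); last lia.
  by rewrite !natrD.
have A3 : (- (2 * m.+1 + 2 * k + 1)%:R : F) = ee a K - 2%:R.
  rewrite /a /aa /ee /K (natr_eqE F (_ : 2 * m.+1 + 2 * k + 1 = 2 * m + 1 + 2 * k + 2)%N); last lia.
  rewrite !natrD ?natrM; ring.
have A4 : (2 * b + (2 * m.+1 + 2 * k + 2)%:R : F) = ff a K b + 2%:R.
  rewrite /a /aa /ff /K (natr_eqE F (_ : 2 * m.+1 + 2 * k + 2 = 2 * m + 1 + 2 * k + 1 + 2)%N); last lia.
  rewrite !natrD ?natrM; ring.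
have B1 : (- (2 * m + 1)%:R : F) = (- a - 2%:R) + 2%:R.
  by rewrite /a /aa; ring.
have B2 : ((2 + 2 * m)%:R : F) = a + 1.
  rewrite /a /aa (natr_eqE F (_ : 2 + 2 * m = 2 * m + 1 + 1)%N); last lia.
  by rewrite !natrD.
have B3 : (- (2 * m + 2 * k + 1)%:R : F) = (ee a K - 2%:R) + 2%:R.
  rewrite /a /aa /ee /K !natrD ?natrM; ring.
have B4 : (2 * b + (2 * m + 2 * k + 2)%:R : F) = ff a K b.
  rewrite /a /aa /ff /K !natrD ?natrM; ring.
set e := ee a K; set f := ff a K b.
have ha1 : a + 1 != 0 by apply: (neq0_pos (p := 2 * m + 2)); [rewrite /a /aa; nateq | lia].
have ha2 : a + 2%:R != 0 by apply: (neq0_pos (p := 2 * m + 3)); [rewrite /a /aa; nateq | lia].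
have hup1 : (a + 1) * (a + 1 + 1) != 0.
  rewrite mulf_neq0 //; apply: (neq0_pos (p := 2 * m + 3)); [rewrite /a /aa; nateq | lia].
have hup2 : (- a - 2%:R) * (- a - 2%:R + 1) != 0.
  rewrite mulf_neq0 //; first by apply: (neq0_neg (p := 2 * m + 3)); [rewrite /a /aa; nateq | lia].
  by apply: (neq0_neg (p := 2 * m + 2)); [rewrite /a /aa; nateq | lia].
have he2 : e - 2%:R != 0.
  by apply: (neq0_neg (p := 2 * m + 2 * k + 3)); [rewrite /e /ee /a /aa /K; nateq | lia].
have he1 : e - 1 != 0.
  by apply: (neq0_neg (p := 2 * m + 2 * k + 2)); [rewrite /e /ee /a /aa /K; nateq | lia].
have hup3 : (e - 2%:R) * (e - 2%:R + 1) != 0.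
  rewrite mulf_neq0 //; rewrite -addrA (_ : - 2%:R + 1 = -1 :> F) //; ring.
have he2n : e - 2%:R + n%:R != 0.
  by apply: (neq0_sub (p := n) (q := 2 * m + 2 * k + 3)); [rewrite /e /ee /a /aa /K; nateq | lia].
have he2n1 : e - 2%:R + (n%:R + 1) != 0.
  by apply: (neq0_sub (p := n.+1) (q := 2 * m + 2 * k + 3)); [rewrite /e /ee /a /aa /K; nateq | lia].
have he1n : e - 1 + n%:R != 0.
  by apply: (neq0_sub (p := n) (q := 2 * m + 2 * k + 2)); [rewrite /e /ee /a /aa /K; nateq | lia].
have hf0 : f != 0.
  by apply: (neq0_lin (p := 2 * m + 2 * k + 2) _ h2B); rewrite /f /ff /a /aa /K; nateq.
have hf1 : f + 1 != 0.
  by apply: (neq0_lin (p := 2 * m + 2 * k + 3) _ h2B); rewrite /f /ff /a /aa /K; nateq.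
have hfn : f + n%:R != 0.
  by apply: (neq0_lin (p := 2 * m + 2 * k + 2 + n) _ h2B); rewrite /f /ff /a /aa /K; nateq.
have hfn1 : f + n%:R + 1 != 0.
  by apply: (neq0_lin (p := 2 * m + 2 * k + 3 + n) _ h2B); rewrite /f /ff /a /aa /K; nateq.
have hfn2 : n%:R + f + 2%:R != 0.
  by apply: (neq0_lin (p := 2 * m + 2 * k + 4 + n) _ h2B); rewrite /f /ff /a /aa /K; nateq.
have hdown : (f + n%:R) * (f + n%:R + 1) != 0 by apply: mulf_neq0.
have hn1 : n%:R + 1 != 0 :> F by rewrite natr1 pnatr_eq0.
have hak1 : a + 2%:R * K + 1 != 0 by exact: nz_ak1.
have hak2 : a + 2%:R * K + 2%:R != 0 by exact: nz_ak2.
have hbk1 : b + K + a + 1 != 0 by exact: (@nz_bk1 F b m k hB).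
have hbk2 : b + K + a + 2%:R != 0 by exact: (@nz_bk2 F b m k hB).
have hpe : poch (e - 2%:R) n != 0 by exact: nz_pe.
have hpf : poch (f + 2%:R) n != 0 by exact: (@nz_pf F b m k n h2B).
have hfact : (n`!)%:R != 0 :> F by apply: natr_neq0; exact: fact_gt0.
clearbody a K.
rewrite A1 A2 A3 A4 B1 B2 B3 B4 -/e -/f.
rewrite expr1n !mulr1.
rewrite (poch_up _ hup1) (poch_up _ hup2) (poch_up _ hup3) (poch_down hdown).
rewrite !pochS factS natrM -!(@natr1 F n) -/N.
rewrite -/N in he2n he2n1 he1n hfn hfn1 hfn2 hn1.
have hke := key ha1 ha2 he2 he1 he1n hf0 hf1 hfn2 hn1 hak1 hak2 hbk1 hbk2.
rewrite -/e -/f in hke.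
set X := poch (- a - 2%:R) n * poch (a + 1) n * poch b n /
  (poch (e - 2%:R) n * (e - 2%:R + N) * poch (f + 2%:R) n * (n`!)%:R).
apply: (@eq_trans _ _ (X * (rho1 a K b N - rr a K b * rho0 a K b N))).
  rewrite /X /rho1 /rho0 -/e -/f.
  field.
  move: hup2 hup3; rewrite !mulf_eq0 !negb_or => /andP [hu1 hu2] /andP [hu3 hu4].
  by rewrite hf1 hf0 he1n ha1 ha2 hfact hpf he2n hpe hfn1 hfn hu4 hu3 hu2 hu1.
rewrite hke /rhoT -/e -/f /X.
have hf2n : f + 2%:R + N != 0 by rewrite -addrA (addrC 2%:R) addrA (addrC f).
field.
by rewrite hfact hpf he2n hpe hn1 hf2n he2n1.
Qed.


Lemma tt_zero (F : numFieldType) (k : nat) (b : F) (m n : nat) :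
  (2 * m + 2 <= n)%N -> tt k b m n = 0.
Proof.
move=> hn; rewrite /tt (@poch_eq0 _ (- (2 * m + 1)%:R) n (2 * m + 1)) ?mul0r //; lia.
Qed.

Lemma GG0 (F : numFieldType) (k : nat) (b : F) (m : nat) : GG k b m 0 = 0.
Proof.
rewrite /GG /Pc (_ : (0%:R : F) = 0) // !expr0n /= !mulr0 !addr0 !mul0r //.
Qed.

Lemma GGend (F : numFieldType) (k : nat) (b : F) (m : nat) : GG k b m (2 * m + 4) = 0.
Proof.
rewrite /GG /TT (@poch_eq0 _ _ _ (2 * m + 3)) ?mul0r ?mulr0 //; first lia.
rewrite /aa -opprD; congr (- _); rewrite -natrD; apply: natr_eqE; lia.
Qed.

Lemma step (F : numFieldType) (k : nat) (b : F) (m : nat) (hk : (1 <= k)%N)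
  (hB : forall j : nat, b + j%:R != 0) (h2B : forall j : nat, 2 * b + j%:R != 0) :
  SS k b m.+1 = rr (aa F m) k%:R b * SS k b m.
Proof.
have E1 : SS k b m.+1 = \sum_(0 <= n < 2 * m + 4) tt k b m.+1 n.
  rewrite big_mkord (_ : (2 * m + 4 = (2 * m.+1 + 1).+1)%N) //; lia.
have E0 : SS k b m = \sum_(0 <= n < 2 * m + 4) tt k b m n.
  rewrite (_ : (2 * m + 4 = (2 * m + 2).+2)%N); last lia.
  rewrite big_nat_recr //= big_nat_recr //= !tt_zero ?addr0; try lia.
  rewrite big_mkord (_ : (2 * m + 2 = (2 * m + 1).+1)%N) //; lia.
rewrite E1 E0 mulr_sumr; apply/eqP; rewrite -subr_eq0 -sumrB; apply/eqP.
rewrite (telescope_sumr_eq (GG k b m)) //.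
  by rewrite GG0 GGend subr0.
move=> j /andP [_ hj]; exact: pointwise.
Qed.

Definition RHSf (F : numFieldType) (k : nat) (b : F) (m : nat) : F :=
  ((k + 1)%:R * (2 * b + (2 * m + 2 * k + 1)%:R)
       * poch (2 * b + (2 * k + 1)%:R) (2 * m) * poch (2 + k)%:R (2 * m))
    / ((2 * m + 2 * k + 1)%:R * (b + (k + 1)%:R)
       * poch (2 * k + 1)%:R (2 * m) * poch (2 + b + k%:R) (2 * m)).

Lemma base (F : numFieldType) (k : nat) (b : F)
  (hB : forall j : nat, b + j%:R != 0) (h2B : forall j : nat, 2 * b + j%:R != 0) :
  SS k b 0 = RHSf k b 0.
Proof.
rewrite /SS /RHSf /F32trunc big_ord_recr big_ord_recr big_ord0 /= !poch0.
rewrite /poch !big_ord_recr !big_ord0 /= !mul1r !expr1n.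
have h1 := hB (k + 1)%N.
have h2 := h2B (2 * 0 + 2 * k + 2)%N.
have h3 : ((2 * 0 + 2 * k + 1)%:R : F) != 0 by rewrite pnatr_eq0; lia.
rewrite ?muln0 ?add0n in h2 h3 *.
rewrite ?muln0 ?add0n ?addn0 (_ : 1`! = 1)%N // (_ : 0`! = 1)%N //.
move: h1 h2 h3; rewrite ?natrD ?addr0 => h1 h2 h3.
field.
by rewrite h1 h2 h3.
Qed.

Lemma cr1 (F : numFieldType) m k : ((2 + 2 * m + 2 * k + 1)%:R : F) = 2 * m%:R + 2 * k%:R + 3.
Proof. rewrite !natrD ?natrM; ring. Qed.
Lemma cr2 (F : numFieldType) m k : ((2 * m + 2 * k + 1)%:R : F) = 2 * m%:R + 2 * k%:R + 1.
Proof. rewrite !natrD ?natrM; ring. Qed.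
Lemma cr3 (F : numFieldType) k : ((2 * k + 1)%:R : F) = 2 * k%:R + 1.
Proof. rewrite !natrD ?natrM; ring. Qed.
Lemma cr4 (F : numFieldType) m : ((2 * m)%:R : F) = 2 * m%:R.
Proof. rewrite ?natrM; ring. Qed.
Lemma cr5 (F : numFieldType) m : ((2 * m).+1%:R : F) = 2 * m%:R + 1.
Proof. rewrite -addn1 !natrD ?natrM; ring. Qed.
Lemma cr6 (F : numFieldType) k : ((2 + k)%:R : F) = k%:R + 2.
Proof. rewrite !natrD; ring. Qed.
Lemma cr7 (F : numFieldType) k : ((k + 1)%:R : F) = k%:R + 1.
Proof. rewrite !natrD; ring. Qed.
Lemma cr8 (F : numFieldType) m : aa F m = 2 * m%:R + 1.
Proof. rewrite /aa !natrD ?natrM; ring. Qed.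

Lemma RHS_step (F : numFieldType) (k : nat) (b : F) (m : nat)
  (hB : forall j : nat, b + j%:R != 0) (h2B : forall j : nat, 2 * b + j%:R != 0) :
  RHSf k b m.+1 = rr (aa F m) k%:R b * RHSf k b m.
Proof.
have hP3 : poch ((2 * k + 1)%:R : F) (2 * m) != 0.
  apply: poch_neq0 => i _; rewrite -natrD pnatr_eq0; lia.
have hP4 : poch (2 + b + k%:R) (2 * m) != 0.
  apply: poch_neq0 => i _; apply: (neq0_lin (p := 2 + k + i) _ hB); nateq.
have hn1 : ((2 * m + 2 * k + 1)%:R : F) != 0 by rewrite pnatr_eq0; lia.
have hn3 : ((2 * k + 1)%:R + (2 * m)%:R : F) != 0 by rewrite -natrD pnatr_eq0; lia.
have hn4 : ((2 * k + 1)%:R + (2 * m).+1%:R : F) != 0 by rewrite -natrD pnatr_eq0; lia.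
have hn5 : 2 + b + k%:R + (2 * m)%:R != 0.
  by apply: (neq0_lin (p := 2 + k + 2 * m) _ hB); nateq.
have hn6 : 2 + b + k%:R + (2 * m).+1%:R != 0.
  by apply: (neq0_lin (p := 3 + k + 2 * m) _ hB); nateq.
have hn7 : b + (k + 1)%:R != 0 by exact: hB.
have hak1 := nz_ak1 F m k.
have hak2 := nz_ak2 F m k.
have hbk1 := @nz_bk1 F b m k hB.
have hbk2 := @nz_bk2 F b m k hB.
rewrite /RHSf mulnS.
rewrite !pochS.
set P1 := poch (2 * b + (2 * k + 1)%:R) (2 * m).
set P2 := poch (2 + k)%:R (2 * m).
set P3 := poch (2 * k + 1)%:R (2 * m) in hP3 *.
set P4 := poch (2 + b + k%:R) (2 * m) in hP4 *.
clearbody P1 P2 P3 P4.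
rewrite /rr /ff /ee.
rewrite cr1 cr2 cr3 cr4 cr5 cr6 cr7 cr8.
rewrite cr8 in hak1 hak2 hbk1 hbk2.
rewrite cr7 in hn7.
rewrite cr2 in hn1.
rewrite cr3 cr4 in hn3.
rewrite cr3 cr5 in hn4.
rewrite cr4 in hn5.
rewrite cr5 in hn6.
rewrite (cr6 F k).
field.
by rewrite hP4 hP3 hn7 hn1 hbk2 hbk1 hak1 hak2.
Qed.

Lemma main_good (F : numFieldType) (k : nat) (b : F) (m : nat) (hk : (1 <= k)%N)
  (hB : forall j : nat, b + j%:R != 0) (h2B : forall j : nat, 2 * b + j%:R != 0) :
  SS k b m = RHSf k b m.
Proof.
elim: m => [|m IH]; first exact: base.
by rewrite step // RHS_step // IH.
Qed.



Lemma poch_horner (F : numFieldType) (p : {poly F}) n x : (poch p n).[x] = poch p.[x] n.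
Proof.
rewrite /poch horner_prod; apply: eq_bigr => i _.
by rewrite hornerD -polyC_natr hornerC.
Qed.

Lemma poch_split (F : comNzRingType) (x : F) n j :
  poch x (n + j) = poch x n * poch (x + n%:R) j.
Proof.
elim: j => [|j IH]; first by rewrite addn0 poch0 mulr1.
by rewrite addnS !pochS IH -mulrA natrD addrA.
Qed.

Definition cn (F : numFieldType) (k m n : nat) : F :=
  poch (- (2 * m + 1)%:R) n * poch (2 + 2 * m)%:R n /
  (poch (- (2 * m + 2 * k + 1)%:R) n * (n`!)%:R).
Definition fX (F : numFieldType) (k m : nat) : {poly F} :=
  (2 : F)%:P * 'X + ((2 * m + 2 * k + 2)%:R : F)%:P.
Definition D2P (F : numFieldType) (k m : nat) : {poly F} :=
  ('X + ((k + 1)%:R : F)%:P) * poch ((2 : F)%:P + 'X + (k%:R : F)%:P) (2 * m).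
Definition NP (F : numFieldType) (k m : nat) : {poly F} :=
  ((k + 1)%:R : F)%:P * ((2 : F)%:P * 'X + ((2 * m + 2 * k + 1)%:R : F)%:P)
  * poch ((2 : F)%:P * 'X + ((2 * k + 1)%:R : F)%:P) (2 * m)
  * (poch ((2 + k)%:R : F) (2 * m))%:P.
Definition cc (F : numFieldType) (k m : nat) : F :=
  (2 * m + 2 * k + 1)%:R * poch ((2 * k + 1)%:R : F) (2 * m).
Definition Qp (F : numFieldType) (k m : nat) : {poly F} :=
  \sum_(n < (2 * m + 1).+1) (cn F k m n)%:P * poch 'X n
       * poch (fX F k m + (n%:R : F)%:P) (2 * m + 1 - n) * D2P F k m
  - NP F k m * poch (fX F k m) (2 * m + 1) * ((cc F k m)^-1)%:P.
Definition Dfull (F : numFieldType) (k m : nat) (x : F) : F :=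
  poch (2 * x + (2 * m + 2 * k + 2)%:R) (2 * m + 1) * ((x + (k + 1)%:R) * poch (2 + x + k%:R) (2 * m)).

Lemma Q_eval (F : numFieldType) (k m : nat) (x : F) (hk : (1 <= k)%N) :
  Dfull k m x != 0 -> (Qp F k m).[x] = Dfull k m x * (SS k x m - RHSf k x m).
Proof.
move=> hD.
have hD1 : poch (2 * x + (2 * m + 2 * k + 2)%:R) (2 * m + 1) != 0.
  by move: hD; rewrite /Dfull mulf_eq0 negb_or => /andP [].
have hD2 : (x + (k + 1)%:R) * poch (2 + x + k%:R) (2 * m) != 0.
  by move: hD; rewrite /Dfull mulf_eq0 negb_or => /andP [].
rewrite /Qp hornerD hornerN horner_sum mulrBr /SS /F32trunc mulr_sumr.
congr (_ - _).
  apply: eq_bigr => -[n hn] _ /=.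
  rewrite /fX /D2P !(hornerM, hornerC, poch_horner, hornerD, hornerX).
  rewrite /Dfull.
  set f := 2 * x + (2 * m + 2 * k + 2)%:R.
  have hsplit : poch f (2 * m + 1) = poch f n * poch (f + n%:R) (2 * m + 1 - n).
    by rewrite -poch_split subnKC //; lia.
  have hpn : poch f n != 0.
    by move: hD1; rewrite -/f hsplit mulf_eq0 negb_or => /andP [].
  have hpd : poch (- (2 * m + 2 * k + 1)%:R : F) n != 0.
    apply: poch_neq0 => i hi; rewrite addrC; apply: sub_natr_neq0; lia.
  have hfact : (n`!)%:R != 0 :> F by apply: natr_neq0; exact: fact_gt0.
  rewrite hsplit /cn expr1n.
  field.
  by rewrite hpn hpd hfact.
move: hD2; rewrite mulf_eq0 negb_or => /andP [hx1 hx2].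
have hc1 : ((2 * m + 2 * k + 1)%:R : F) != 0 by rewrite pnatr_eq0; lia.
have hc2 : poch ((2 * k + 1)%:R : F) (2 * m) != 0.
  apply: poch_neq0 => i _; rewrite -natrD pnatr_eq0; lia.
rewrite /NP /fX /cc !(hornerM, hornerC, poch_horner, hornerD, hornerX).
rewrite /Dfull /RHSf.
field.
by rewrite hx2 hc2 -cr7 hx1 -cr2 hc1.
Qed.

Lemma Qp_zero (F : numFieldType) (k m : nat) (hk : (1 <= k)%N) : Qp F k m = 0.
Proof.
apply/eqP; apply/negPn/negP => hQ.
set rs := [seq (j.+1)%:R : F | j <- iota 0 (size (Qp F k m))].
have H := max_poly_roots (rs := rs) hQ.
suff : (size rs < size (Qp F k m))%N by rewrite size_map size_iota ltnn.
apply: H.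
  apply/allP => y /mapP [j _ ->].
  have hB : forall i : nat, (j.+1)%:R + i%:R != 0 :> F.
    by move=> i; rewrite -natrD pnatr_eq0.
  have h2B : forall i : nat, 2 * (j.+1)%:R + i%:R != 0 :> F.
    by move=> i; rewrite -natrM -natrD pnatr_eq0; lia.
  rewrite /root Q_eval //.
    by rewrite main_good // subrr mulr0.
  rewrite /Dfull; apply/mulf_neq0; last apply/mulf_neq0.
  - apply: poch_neq0 => i _; rewrite -addrA -natrD -natrM -natrD pnatr_eq0; lia.
  - exact: hB.
  - apply: poch_neq0 => i _.
    rewrite (_ : 2 + (j.+1)%:R + k%:R + i%:R = (j.+1)%:R + (2 + k + i)%:R :> F).
      exact: hB.
    by rewrite !natrD; ring.
rewrite map_inj_uniq ?iota_uniq // => i1 i2 /eqP; by rewrite eqr_nat => /eqP [->].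
Qed.

Unset Implicit Arguments.
Local Open Scope complex_scope.

Theorem mainTheorem8 (R : realType) (m k : nat) (beta : R[i])
  (hm : (1 <= m)%N) (hk : (1 <= k)%N)
  (hb : notNonPosInt beta)
  (hb2 : notNonPosInt (2 * beta + (2 * m + 2 * k + 2)%:R)) :
  F32trunc (- (2 * m + 1)%:R) (2 + 2 * m)%:R beta
           (- (2 * m + 2 * k + 1)%:R) (2 * beta + (2 * m + 2 * k + 2)%:R)
           1 (2 * m + 1)
  = ((k + 1)%:R * (2 * beta + (2 * m + 2 * k + 1)%:R)
       * poch (2 * beta + (2 * k + 1)%:R) (2 * m) * poch (2 + k)%:R (2 * m))
    / ((2 * m + 2 * k + 1)%:R * (beta + (k + 1)%:R)
       * poch (2 * k + 1)%:R (2 * m) * poch (2 + beta + k%:R) (2 * m)).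
Proof.
have hB : forall j : nat, beta + j%:R != 0.
  move=> j; apply/eqP => h; apply: (hb j); apply/eqP; rewrite -subr_eq0 opprK h //.
have hD : Dfull k m beta != 0.
  rewrite /Dfull; apply/mulf_neq0; last apply/mulf_neq0.
  - apply: poch_neq0 => i _; apply/eqP => h; apply: (hb2 i); apply/eqP.
    by rewrite -subr_eq0 opprK h.
  - exact: hB.
  - apply: poch_neq0 => i _.
    rewrite (_ : 2 + beta + k%:R + i%:R = beta + (2 + k + i)%:R).
      exact: hB.
    by rewrite !natrD; ring.
have := Q_eval hk hD; rewrite Qp_zero // horner0 => /esym /eqP.
rewrite mulf_eq0 (negbTE hD) /= subr_eq0 => /eqP.
by rewrite /SS /RHSf.
Qed.
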